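(* Let $r,s\ge2$ be fixed integers such that either $s\ge5$ and $r>\rho(s)$, or $s\in\{2,3,4\}$ and $(r,s)\ne(2,2)$. Then: (a) Every local maximum of $\varphi$ on $K$ either equals $(0,0)$ or lies in the interior of $K$. (b) For every stationary point $(\alpha,\beta)$ of $\varphi$ in the interior of $K$, there exists $x\in(-1,\infty)$ such that $\alpha=\alpha(x)$, $\beta=\beta(x)$, and \[ (rs-r-s)\Big(1+\frac{x}{r-1}\Big)^{s-2}=(1+x)\Big(rs-r-s+sx+\frac{x(x+1)}{r-1}\Big).\tag{$\ast$} \] (c) Let $f:(-1,\infty)\to\mathbb R$ be defined by $f(x)=\varphi(\alpha(x),\beta(x))$. If $x\in(-1,\infty)$ is a stationary point of $f$, then $x$ satisfies $(\ast)$.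
   Context: Let $g(x)=x\log x$ for $x>0$, with $g(0)=0$. Let \[ K=\{(\alpha,\beta)\in\mathbb R^2:\alpha,\beta\ge0,\ (s-1)\alpha+\beta\le1\}. \] Define $\varphi:K\to\mathbb R$ by \begin{align*} \varphi(\alpha,\beta)&=(\alpha+\beta)\log(r-1)+g(\alpha+\beta)+g(r-1-\alpha-\beta)-\tfrac{2}{s-1}g(\beta)-g(\alpha)\\ &\quad-\tfrac{1}{s(s-1)}g(rs-r-s-s\beta)-\tfrac{1}{s-1}g(1-(s-1)\alpha-\beta). \end{align*} For $x\ge-1$, let \[ \alpha(x)=\frac{1+x}{rs-r+sx+\frac{x(x+1)}{r-1}},\qquad \beta(x)=\frac{rs-r-s}{rs-r+sx+\frac{x(x+1)}{r-1}}. \] For $s\ge5$, $\rho(s)$ is the unique real number in $(2,\infty)$ satisfying \[ (s-1)^{\rho}(\rho-1)^{s(\rho-1)}=\rho^{\rho s-\rho-s}(\rho s-\rho-s)^{(\rho s-\rho-s)/(s-1)}. \] *)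

(* Defs.v *)
From Stdlib Require Import Reals Lra.
From Coquelicot Require Import Coquelicot.
Open Scope R_scope.

(* g(x) = x log x for x > 0, g(0) = 0.  (Stdlib's ln is 0 on x <= 0, so this
   also gives g 0 = 0; values at negative arguments are never used in the
   statement.) *)
Definition g (x : R) : R := if Rlt_dec 0 x then x * ln x else 0.

Section Phi.
Variables rn sn : nat.
Let r : R := INR rn.
Let s : R := INR sn.

Definition inK (a b : R) : Prop := 0 <= a /\ 0 <= b /\ (s - 1) * a + b <= 1.

Definition intK (a b : R) : Prop := 0 < a /\ 0 < b /\ (s - 1) * a + b < 1.

Definition phi (a b : R) : R :=
  (a + b) * ln (r - 1) + g (a + b) + g (r - 1 - a - b)
  - 2 / (s - 1) * g b - g a
  - 1 / (s * (s - 1)) * g (r * s - r - s - s * b)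
  - 1 / (s - 1) * g (1 - (s - 1) * a - b).

(* Natural domain of phi inside K: all arguments of g are >= 0. *)
Definition domphi (a b : R) : Prop :=
  inK a b /\ 0 <= r - 1 - a - b /\ 0 <= r * s - r - s - s * b.

(* Points where all arguments of g are > 0 (phi is smooth near such points). *)
Definition regphi (a b : R) : Prop :=
  0 < a /\ 0 < b /\ 0 < r - 1 - a - b /\ 0 < r * s - r - s - s * b
  /\ 0 < 1 - (s - 1) * a - b.

Definition local_max_phi (a b : R) : Prop :=
  domphi a b /\
  exists eps : R, 0 < eps /\
    forall a' b' : R, domphi a' b' -> Rabs (a' - a) < eps -> Rabs (b' - b) < eps ->
      phi a' b' <= phi a b.

Definition stationary_phi (a b : R) : Prop :=
  is_derive (fun a' => phi a' b) a 0 /\ is_derive (fun b' => phi a b') b 0.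

Definition denom (x : R) : R := r * s - r + s * x + x * (x + 1) / (r - 1).
Definition alphax (x : R) : R := (1 + x) / denom x.
Definition betax (x : R) : R := (r * s - r - s) / denom x.

Definition fx (x : R) : R := phi (alphax x) (betax x).

Definition star (x : R) : Prop :=
  (r * s - r - s) * (1 + x / (r - 1)) ^ (sn - 2)%nat
  = (1 + x) * (r * s - r - s + s * x + x * (x + 1) / (r - 1)).
End Phi.

Definition rho_eq (s rho : R) : Prop :=
  Rpower (s - 1) rho * Rpower (rho - 1) (s * (rho - 1))
  = Rpower rho (rho * s - rho - s)
    * Rpower (rho * s - rho - s) ((rho * s - rho - s) / (s - 1)).

Definition is_rho (s rho : R) : Prop :=
  2 < rho /\ rho_eq s rho /\ (forall rho', 2 < rho' -> rho_eq s rho' -> rho' = rho).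

(* Main.v *)
Require Import Defs.
From Stdlib Require Import Reals Lra Psatz.
From Coquelicot Require Import Coquelicot.
Open Scope R_scope.


Lemma ln_le_m1 u : 0 < u -> ln u <= u - 1.
Proof. intro Hu. pose proof (exp_ineq1_le (ln u)). rewrite exp_ln in H; lra. Qed.

Lemma g_pos x : 0 < x -> g x = x * ln x.
Proof. intro H. unfold g. destruct (Rlt_dec 0 x); [reflexivity|lra]. Qed.

Lemma g_0 : g 0 = 0.
Proof. unfold g. destruct (Rlt_dec 0 0); [lra|reflexivity]. Qed.

Lemma is_derive_g x : 0 < x -> is_derive g x (ln x + 1).
Proof.
  intro Hx.
  apply is_derive_ext_loc with (f := fun z => z * ln z).
  - exists (mkposreal x Hx). intros z Hz. simpl in Hz.
    unfold ball in Hz; simpl in Hz; unfold AbsRing_ball, abs, minus, plus, opp in Hz; simpl in Hz.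
    rewrite g_pos; [reflexivity|]. apply Rabs_def2 in Hz. lra.
  - auto_derive; [exact Hx|]. field. lra.
Qed.

Lemma Derive_g x : 0 < x -> Derive (fun y => g y) x = ln x + 1.
Proof. intro H. apply is_derive_unique. apply is_derive_g; exact H. Qed.

Lemma ex_derive_g x : 0 < x -> ex_derive (fun y => g y) x.
Proof. intro H. eexists. apply is_derive_g; exact H. Qed.

Lemma g_lower x y : 0 < x -> 0 <= y -> g y >= g x + (ln x + 1) * (y - x).
Proof.
  intros Hx Hy. rewrite (g_pos x Hx). destruct Hy as [Hy|Hy].
  - rewrite (g_pos y Hy).
    assert (P: 0 < x / y) by (apply Rdiv_lt_0_compat; lra).
    pose proof (ln_le_m1 (x / y) P) as L. rewrite ln_div in L by lra.
    assert (E: y * (x / y - 1) = x - y) by (field; apply Rgt_not_eq; lra).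
    assert (y * (ln x - ln y) <= y * (x / y - 1)) by (apply Rmult_le_compat_l; lra).
    nra.
  - subst y. rewrite g_0. nra.
Qed.

Lemma g_upper x y : 0 < x -> 0 <= y -> g y <= g x + (ln x + 1) * (y - x) + (y - x)^2 / x.
Proof.
  intros Hx Hy. rewrite (g_pos x Hx). destruct Hy as [Hy|Hy].
  - rewrite (g_pos y Hy).
    assert (P: 0 < y / x) by (apply Rdiv_lt_0_compat; lra).
    pose proof (ln_le_m1 (y / x) P) as L. rewrite ln_div in L by lra.
    assert (y * (ln y - ln x) <= y * (y / x - 1)) by (apply Rmult_le_compat_l; lra).
    assert (E: (y - x)^2 / x = y * (y / x - 1) - y + x) by (field; apply Rgt_not_eq; lra).
    rewrite E. nra.
  - subst y. rewrite g_0. assert (E: (0 - x)^2 / x = x) by (field; apply Rgt_not_eq; lra). rewrite E. nra.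
Qed.

Lemma g_scale c t : 0 <= c -> 0 < t -> g (c * t) = t * g c + c * g t.
Proof.
  intros Hc Ht. destruct Hc as [Hc|Hc].
  - rewrite !g_pos; try nra. rewrite ln_mult by lra. ring.
  - subst c. rewrite Rmult_0_l, g_0. ring.
Qed.


Definition Pa (rn sn : nat) (a b : R) : R :=
  let r := INR rn in let s := INR sn in
  ln (r - 1) + ln (a + b) - ln (r - 1 - a - b) - ln a + ln (1 - (s - 1) * a - b).
Definition Pb (rn sn : nat) (a b : R) : R :=
  let r := INR rn in let s := INR sn in
  ln (r - 1) + ln (a + b) - ln (r - 1 - a - b)
  + (ln (r * s - r - s - s * b) + ln (1 - (s - 1) * a - b) - 2 * ln b) / (s - 1).

Lemma ln_inj3 p q u v : 0 < p -> 0 < q -> 0 < u -> 0 < v ->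
  ln p + ln q + ln u = ln v -> p * q * u = v.
Proof.
  intros. rewrite <- (ln_mult p q), <- (ln_mult (p*q) u) in H3; try assumption.
  apply ln_inv; try assumption. all: apply Rmult_lt_0_compat; try apply Rmult_lt_0_compat; assumption.
Qed.

Lemma denom_id rn sn x : 2 <= INR rn ->
  (INR rn - 1) * denom rn sn x
  = (INR rn * INR sn - INR rn - INR sn + 1 + x) * (INR rn + x).
Proof. intro. unfold denom. field. lra. Qed.

Lemma star_of_Pb rn sn x : (2 <= sn)%nat -> 2 <= INR rn ->
  0 < INR rn * INR sn - INR rn - INR sn -> -1 < x ->
  regphi rn sn (alphax rn sn x) (betax rn sn x) ->
  Pb rn sn (alphax rn sn x) (betax rn sn x) = 0 -> star rn sn x.
Proof.
  intros hs hr hk hx Hreg HP.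
  destruct sn as [|[|m]]; [lia|lia|].
  unfold star. replace (S (S m) - 2)%nat with m by lia.
  assert (Es : INR (S (S m)) = INR (S m) + 1) by (rewrite (S_INR (S m)); ring).
  assert (Hm : 0 < INR (S m)) by (apply lt_0_INR; lia).
  set (s := INR (S (S m))) in *.
  set (r := INR rn) in *.
  set (k := r * s - r - s) in *.
  pose proof (denom_id rn (S (S m)) x hr) as hd. fold r s in hd. fold k in hd.
  set (d := denom rn (S (S m)) x) in *.
  assert (hdp : 0 < d).
  { apply (Rmult_lt_reg_l (r-1)); [lra|]. rewrite Rmult_0_r, hd. apply Rmult_lt_0_compat. all:lra. }
  assert (Hd : denom rn (S (S m)) x <> 0) by (fold d; lra).
  unfold Pb in HP. fold r s in HP.
  unfold alphax, betax in HP. fold d r s in HP. fold k in HP.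
  assert (eA : (1 + x) / d + k / d = (1 + x + k) / d) by (field; lra).
  assert (eB : r - 1 - (1 + x) / d - k / d = (k + 1 + x) * (r - 1 + x) / d).
  { apply (Rmult_eq_reg_l (r - 1)); [|lra].
    replace ((r - 1) * ((k + 1 + x) * (r - 1 + x) / d)) with ((k+1+x) * (r - 1 + x) * (r - 1) / d) by (field; lra).
    replace ((r - 1) * (r - 1 - (1 + x) / d - k / d)) with (((r-1) * d * (r - 1) - (r-1) * (1 + x + k)) / d) by (field; lra).
    rewrite hd. unfold k. field. lra. }
  assert (eC : 1 - (s - 1) * ((1 + x) / d) - k / d = (1 + x) * (1 + x / (r - 1)) / d).
  { transitivity ((d - (s - 1) * (1 + x) - k) / d). { field. lra. }
    f_equal. unfold d, denom. fold r s. unfold k. field. lra. }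
  assert (eD : k - s * (k / d) = k * (d - s) / d) by (field; lra).
  rewrite eA, eB, eC, eD in HP.
  destruct Hreg as [_ [_ [_ [hD _]]]]. unfold alphax, betax in hD. fold d r s in hD. fold k in hD.
  rewrite eD in hD.
  set (Y := 1 + x / (r - 1)) in *.
  assert (hY : 0 < Y).
  { replace Y with ((r - 1 + x) / (r - 1)) by (unfold Y; field; lra). apply Rdiv_lt_0_compat; lra. }
  assert (hdms : 0 < d - s).
  { assert (0 < k*(d-s)) by (replace (k*(d-s)) with (k*(d-s)/d*d) by (field;lra); apply Rmult_lt_0_compat; lra).
    apply (Rmult_lt_reg_l k); lra. }
  set (X := (r - 1) * ((1 + x + k) / d) / ((k + 1 + x) * (r - 1 + x) / d)) in *.
  assert (hXY : X * Y = 1) by (unfold X, Y; field; repeat split; lra).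
  assert (hX : 0 < X) by nra.
  assert (lX : ln X = ln (r - 1) + ln ((1 + x + k) / d) - ln ((k + 1 + x) * (r - 1 + x) / d)).
  { unfold X. rewrite ln_div, ln_mult; try lra.
    all: repeat (apply Rmult_lt_0_compat || apply Rdiv_lt_0_compat || apply Rinv_0_lt_compat); lra. }
  assert (Hlog : ln (X ^ (S m)) + ln (k * (d - s) / d) + ln ((1 + x) * Y / d) = ln ((k / d) ^ 2)).
  { rewrite !ln_pow; [|apply Rdiv_lt_0_compat; lra|lra].
    rewrite lX. replace (INR 2) with 2 by (simpl; ring).
    assert (e1 : s - 1 = INR (S m)) by lra. rewrite e1 in HP.
    apply Rminus_diag_uniq. rewrite <- (Rmult_0_r (INR (S m))), <- HP. field. lra. }
  apply ln_inj3 in Hlog.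
  2: apply pow_lt; lra.
  2,3: repeat (apply Rmult_lt_0_compat || apply Rdiv_lt_0_compat || apply Rinv_0_lt_compat); lra.
  2: apply pow_lt, Rdiv_lt_0_compat; lra.
  assert (HP2 : X ^ (S m) * (Y * Y ^ m) = 1).
  { change (Y * Y ^ m) with (Y ^ (S m)). rewrite <- Rpow_mult_distr, hXY. apply pow1. }
  fold Y. fold k.
  replace (k + s * x + x * (x + 1) / (r - 1)) with (d - s) by (unfold d, denom, k; fold r s; field; lra).
  apply (Rmult_eq_reg_l (X ^ (S m) * k * Y / (d * d))).
  2: { assert (0 < X ^ (S m)) by (apply pow_lt; lra). apply Rgt_not_eq. unfold Rdiv. repeat (assumption || apply Rmult_lt_0_compat || apply Rinv_0_lt_compat). }
  transitivity ((X ^ S m * (Y * Y ^ m)) * (k / d) ^ 2). { field. lra. }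
  rewrite HP2, <- Hlog. field. lra.
Qed.


Lemma Pa_curve rn sn x : 2 <= INR rn ->
  0 < INR rn * INR sn - INR rn - INR sn -> -1 < x ->
  regphi rn sn (alphax rn sn x) (betax rn sn x) ->
  Pa rn sn (alphax rn sn x) (betax rn sn x) = 0.
Proof.
  intros hr hk hx Hreg.
  set (s := INR sn) in *.
  set (r := INR rn) in *.
  pose proof (denom_id rn sn x hr) as hd. fold r s in hd.
  set (d := denom rn sn x) in *.
  assert (hdp : 0 < d).
  { apply (Rmult_lt_reg_l (r-1)); [lra|]. rewrite Rmult_0_r, hd. apply Rmult_lt_0_compat; lra. }
  destruct Hreg as [h1 [h2 [h3 [h4 h5]]]]. fold r s in h3, h4, h5.
  unfold Pa. fold r s.
  assert (E : (r - 1) * (alphax rn sn x + betax rn sn x) * (1 - (s - 1) * alphax rn sn x - betax rn sn x)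
              = alphax rn sn x * (r - 1 - alphax rn sn x - betax rn sn x)).
  { unfold alphax, betax. fold r s d.
    apply (Rmult_eq_reg_r (d * d)). 2: apply Rgt_not_eq; apply Rmult_lt_0_compat; lra.
    replace ((r - 1) * ((1 + x) / d + (r * s - r - s) / d) * (1 - (s - 1) * ((1 + x) / d) - (r * s - r - s) / d) * (d * d))
      with ((1 + x + (r * s - r - s)) * ((r - 1) * d - (r - 1) * (s - 1) * (1 + x) - (r-1) * (r * s - r - s))) by (field; lra).
    replace ((1 + x) / d * (r - 1 - (1 + x) / d - (r * s - r - s) / d) * (d * d))
      with ((1 + x) * ((r - 1) * d - (1 + x) - (r * s - r - s))) by (field; lra).
    rewrite hd. ring. }
  assert (L : ln (r - 1) + ln (alphax rn sn x + betax rn sn x) + ln (1 - (s - 1) * alphax rn sn x - betax rn sn x)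
            = ln (alphax rn sn x) + ln (r - 1 - alphax rn sn x - betax rn sn x)).
  { rewrite <- !ln_mult; try lra. rewrite E. reflexivity. all: apply Rmult_lt_0_compat; lra. }
  lra.
Qed.

Lemma betax_deriv rn sn x : 2 <= INR rn ->
  0 < INR rn * INR sn - INR rn - INR sn -> -1 < x ->
  is_derive (betax rn sn) x
    (- (INR rn * INR sn - INR rn - INR sn) * (INR sn + (2 * x + 1) / (INR rn - 1)) / (denom rn sn x)^2).
Proof.
  intros hr hk hx.
  pose proof (denom_id rn sn x hr) as hd.
  assert (hdp : 0 < denom rn sn x).
  { apply (Rmult_lt_reg_l (INR rn-1)); [lra|]. rewrite Rmult_0_r, hd. apply Rmult_lt_0_compat; lra. }
  unfold betax. unfold denom in hd |- *. auto_derive.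
  - unfold denom in hdp. lra.
  - field. split; [lra|]. intro Hc.
    assert (Hz : (INR rn - 1) * denom rn sn x = 0) by (unfold denom; rewrite <- Hc; field; lra).
    apply Rmult_integral in Hz. lra.
Qed.

Lemma alphax_ex rn sn x : 2 <= INR rn ->
  0 < INR rn * INR sn - INR rn - INR sn -> -1 < x -> ex_derive (alphax rn sn) x.
Proof.
  intros hr hk hx.
  pose proof (denom_id rn sn x hr) as hd.
  assert (hdp : 0 < denom rn sn x).
  { apply (Rmult_lt_reg_l (INR rn-1)); [lra|]. rewrite Rmult_0_r, hd. apply Rmult_lt_0_compat; lra. }
  unfold alphax. unfold denom in *. auto_derive. lra.
Qed.

Lemma phi_curve (rn sn : nat) (A B : R -> R) x dA dB :
  2 <= INR sn -> is_derive A x dA -> is_derive B x dB -> regphi rn sn (A x) (B x) ->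
  is_derive (fun y => phi rn sn (A y) (B y)) x (dA * Pa rn sn (A x) (B x) + dB * Pb rn sn (A x) (B x)).
Proof.
  intros hs HA HB [h1 [h2 [h3 [h4 h5]]]].
  unfold phi, Pa, Pb.
  assert (EA := is_derive_unique _ _ _ HA).
  assert (EB := is_derive_unique _ _ _ HB).
  auto_derive.
  - repeat split; try (eexists; eassumption); apply ex_derive_g; lra.
  - change (Derive (fun x0 => A x0) x) with (Derive A x).
    change (Derive (fun x0 => B x0) x) with (Derive B x).
    rewrite EA, EB.
    replace (INR rn - 1 + - A x + - B x) with (INR rn - 1 - A x - B x) by ring.
    replace (INR rn * INR sn - INR rn - INR sn + - (INR sn * B x)) with (INR rn * INR sn - INR rn - INR sn - INR sn * B x) by ring.
    replace (1 + - ((INR sn - 1) * A x) + - B x) with (1 - (INR sn - 1) * A x - B x) by ring.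
    rewrite !Derive_g by lra.
    field. lra.
Qed.


Lemma k_pos (r s : nat) : (2 <= r)%nat -> (2 <= s)%nat -> ~ (r = 2%nat /\ s = 2%nat) ->
  0 < INR r * INR s - INR r - INR s.
Proof.
  intros hr hs hn.
  assert (Hr : 2 <= INR r) by (replace 2 with (INR 2) by (simpl; ring); apply le_INR; lia).
  assert (Hs : 2 <= INR s) by (replace 2 with (INR 2) by (simpl; ring); apply le_INR; lia).
  assert (H3 : 3 <= INR r \/ 3 <= INR s).
  { destruct (Nat.eq_dec r 2) as [e|e].
    - right. replace 3 with (INR 3) by (simpl; ring). apply le_INR. lia.
    - left. replace 3 with (INR 3) by (simpl; ring). apply le_INR. lia. }
  destruct H3; nra.
Qed.

Lemma part_c (rn sn : nat) : (2 <= sn)%nat -> 2 <= INR rn -> 2 <= INR sn ->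
  0 < INR rn * INR sn - INR rn - INR sn ->
  forall x : R, -1 < x -> regphi rn sn (alphax rn sn x) (betax rn sn x) ->
     is_derive (fx rn sn) x 0 -> star rn sn x.
Proof.
  intros hs hr hs2 hk x hx Hreg Hd.
  destruct (alphax_ex rn sn x hr hk hx) as [dA HdA].
  pose proof (betax_deriv rn sn x hr hk hx) as HdB.
  pose proof (phi_curve rn sn (alphax rn sn) (betax rn sn) x _ _ hs2 HdA HdB Hreg) as HC.
  change (is_derive (fun y => phi rn sn (alphax rn sn y) (betax rn sn y)) x 0) in Hd.
  apply is_derive_unique in HC. apply is_derive_unique in Hd. rewrite Hd in HC.
  rewrite (Pa_curve rn sn x hr hk hx Hreg) in HC.
  apply star_of_Pb; try assumption.
  pose proof (denom_id rn sn x hr) as hd.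
  set (d := denom rn sn x) in *.
  assert (hdp : 0 < d).
  { apply (Rmult_lt_reg_l (INR rn-1)); [lra|]. rewrite Rmult_0_r, hd. apply Rmult_lt_0_compat; lra. }
  assert (hq : 0 < INR sn + (2 * x + 1) / (INR rn - 1)).
  { assert (-1 <= (2 * x + 1) / (INR rn - 1)).
    { apply (Rmult_le_reg_r (INR rn - 1)); [lra|]. unfold Rdiv. rewrite Rmult_assoc, Rinv_l by lra. lra. }
    lra. }
  assert (hdB : - (INR rn * INR sn - INR rn - INR sn) * (INR sn + (2 * x + 1) / (INR rn - 1)) / d ^ 2 <> 0).
  { assert (0 < (INR rn * INR sn - INR rn - INR sn) * (INR sn + (2 * x + 1) / (INR rn - 1)) / d ^ 2)
      by (apply Rdiv_lt_0_compat; [apply Rmult_lt_0_compat|apply pow_lt]; lra).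
    apply Rlt_not_eq.
    replace (- (INR rn * INR sn - INR rn - INR sn) * (INR sn + (2 * x + 1) / (INR rn - 1)) / d ^ 2)
      with (- ((INR rn * INR sn - INR rn - INR sn) * (INR sn + (2 * x + 1) / (INR rn - 1)) / d ^ 2)) by (field; lra).
    lra. }
  rewrite Rmult_0_r, Rplus_0_l in HC. symmetry in HC. apply Rmult_integral in HC.
  destruct HC as [HC|HC]; [contradiction|exact HC].
Qed.

Lemma part_b (rn sn : nat) : (2 <= sn)%nat -> 2 <= INR rn -> 2 <= INR sn ->
  0 < INR rn * INR sn - INR rn - INR sn ->
  forall a b : R, intK sn a b -> regphi rn sn a b -> stationary_phi rn sn a b ->
     exists x : R, -1 < x /\ a = alphax rn sn x /\ b = betax rn sn x /\ star rn sn x.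
Proof.
  intros hs hr hs2 hk a b HK Hreg [Sa Sb].
  pose proof (phi_curve rn sn (fun y => y) (fun _ => b) a 1 0 hs2 (is_derive_id a) (is_derive_const b a) Hreg) as HCa.
  pose proof (phi_curve rn sn (fun _ => a) (fun y => y) b 0 1 hs2 (is_derive_const a b) (is_derive_id b) Hreg) as HCb.
  cbv beta in HCa, HCb.
  apply is_derive_unique in HCa, HCb, Sa, Sb.
  rewrite Sa in HCa. rewrite Sb in HCb.
  assert (HPa : Pa rn sn a b = 0) by lra.
  assert (HPb : Pb rn sn a b = 0) by lra.
  clear HCa HCb Sa Sb.
  destruct Hreg as [h1 [h2 [h3 [h4 h5]]]].
  remember (INR rn) as r eqn:Er. remember (INR sn) as s eqn:Es.
  assert (E : (r - 1) * (a + b) * (1 - (s - 1) * a - b) = a * (r - 1 - a - b)).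
  { unfold Pa in HPa. rewrite <- Er, <- Es in HPa.
    assert (L : ln ((r - 1) * (a + b) * (1 - (s - 1) * a - b)) = ln (a * (r - 1 - a - b))).
    { rewrite !ln_mult; try lra. all: apply Rmult_lt_0_compat; lra. }
    apply ln_inv; try assumption; repeat apply Rmult_lt_0_compat; lra. }
  assert (key : (r - 1) * b = (a + b) * ((r * s - r - s) * a + (r - 1) * b)).
  { assert (Z : (r - 1) * b - (a + b) * ((r * s - r - s) * a + (r - 1) * b)
             = (r - 1) * (a + b) * (1 - (s - 1) * a - b) - a * (r - 1 - a - b)) by ring.
    rewrite E in Z. lra. }
  set (x := (r * s - r - s) * a / b - 1).
  assert (hx : -1 < x).
  { unfold x. assert (0 < (r * s - r - s) * a / b) by (apply Rdiv_lt_0_compat; [apply Rmult_lt_0_compat|]; lra). lra. }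
  assert (hd2 : denom rn sn x = (r * s - r - s) / b).
  { assert (F : (r - 1) * b ^ 2 * denom rn sn x = (r * s - r - s) * ((a + b) * ((r * s - r - s) * a + (r - 1) * b))).
    { unfold denom. rewrite <- Er, <- Es. unfold x. field. lra. }
    rewrite <- key in F.
    apply (Rmult_eq_reg_l ((r - 1) * b ^ 2)). 2: apply Rgt_not_eq; apply Rmult_lt_0_compat; [lra|apply pow_lt; lra].
    rewrite F. field. lra. }
  assert (ea : a = alphax rn sn x).
  { unfold alphax. rewrite hd2. unfold x. field. lra. }
  assert (eb : b = betax rn sn x).
  { unfold betax. rewrite hd2, <- Er, <- Es. field. lra. }
  exists x. split; [exact hx|]. split; [exact ea|]. split; [exact eb|].
  subst r s.
  apply star_of_Pb; try assumption.
  - rewrite <- ea, <- eb. repeat split; assumption.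
  - rewrite <- ea, <- eb. exact HPb.
Qed.


Lemma term_any w x c : 0 <= x -> (0 < x \/ (0 <= c /\ w <= 0)) ->
  exists L Q z, 0 <= Q /\ z <= 0 /\ (x = 0 -> z = w * c) /\
    forall t y, 0 < t <= 1 -> y = x + c * t -> 0 <= y ->
      w * (g y - g x) >= t * L - t ^ 2 * Q + z * g t.
Proof.
  intros hx H. destruct hx as [hx|hx].
  - exists (w * (ln x + 1) * c), (Rabs w * c ^ 2 / x), 0. split; [|split; [lra|split; [lra|]]].
    + apply Rmult_le_pos; [apply Rmult_le_pos; [apply Rabs_pos| apply pow2_ge_0]|apply Rlt_le, Rinv_0_lt_compat; lra].
    + intros t y ht hy hy0.
      pose proof (g_lower x y hx hy0) as Lo. pose proof (g_upper x y hx hy0) as Up.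
      assert (E : y - x = c * t) by lra. rewrite E in Lo, Up.
      assert (Eq : (c * t) ^ 2 / x = t ^ 2 * (c ^ 2 / x)) by (field; lra).
      rewrite Eq in Up.
      assert (0 <= c ^ 2 / x) by (apply Rmult_le_pos; [apply pow2_ge_0|apply Rlt_le, Rinv_0_lt_compat; lra]).
      assert (0 <= t ^ 2) by apply pow2_ge_0.
      assert (0 <= t ^ 2 * (c ^ 2 / x)) by (apply Rmult_le_pos; lra).
      replace (t * (w * (ln x + 1) * c) - t ^ 2 * (Rabs w * c ^ 2 / x) + 0 * g t)
        with (w * ((ln x + 1) * (c * t)) - Rabs w * (t ^ 2 * (c ^ 2 / x))) by (unfold Rdiv; ring).
      destruct (Rle_dec 0 w) as [hw|hw].
      * rewrite Rabs_right by lra.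
        assert (w * (g y - g x) >= w * ((ln x + 1) * (c * t))).
        { apply Rle_ge, Rmult_le_compat_l; lra. }
        assert (0 <= w * (t ^ 2 * (c ^ 2 / x))) by (apply Rmult_le_pos; lra).
        lra.
      * rewrite Rabs_left by lra.
        assert (w * (g y - g x) >= w * ((ln x + 1) * (c * t) + t ^ 2 * (c ^ 2 / x))).
        { apply Rle_ge. apply Rmult_le_compat_neg_l; lra. }
        lra.
  - subst x. destruct H as [H|[hc hw]]; [lra|].
    exists (w * g c), 0, (w * c). split; [lra|split; [|split; [reflexivity|]]].
    + replace (w * c) with (- ((- w) * c)) by ring. assert (0 <= -w * c) by (apply Rmult_le_pos; lra). lra.
    + intros t y ht hy hy0. subst y. rewrite Rplus_0_l, g_scale, g_0 by lra.
      right. ring.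
Qed.

Lemma dom_aff x c : 0 <= x -> (0 < x \/ 0 <= c) ->
  exists d, 0 < d /\ forall t, 0 < t < d -> 0 <= x + c * t.
Proof.
  intros hx H. destruct (Rle_dec 0 c) as [hc|hc].
  - exists 1. split; [lra|]. intros t ht. assert (0 <= c * t) by (apply Rmult_le_pos; lra). lra.
  - destruct H as [H|H]; [|lra].
    exists (x / (- c)). split. { apply Rdiv_lt_0_compat; lra. }
    intros t [ht1 ht2].
    assert (t * (- c) < x).
    { apply (Rmult_lt_compat_r (-c)) in ht2; [|lra]. unfold Rdiv in ht2. rewrite Rmult_assoc, Rinv_l in ht2 by lra. lra. }
    lra.
Qed.

Lemma numeric S Q Z eps : 0 <= Q -> Z < 0 -> 0 < eps ->
  exists t, 0 < t /\ t < eps /\ t <= 1 /\ t * S - t ^ 2 * Q + Z * g t > 0.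
Proof.
  intros hQ hZ he.
  set (M := (Rabs S + Q + 1) / (- Z)).
  set (t := Rmin (eps / 2) (Rmin 1 (exp (- M)))).
  assert (ht : 0 < t).
  { unfold t. apply Rmin_pos; [lra|]. apply Rmin_pos; [lra|apply exp_pos]. }
  assert (ht1 : t <= 1) by (unfold t; eapply Rle_trans; [apply Rmin_r|apply Rmin_l]).
  assert (ht2 : t <= exp (- M)) by (unfold t; eapply Rle_trans; [apply Rmin_r|apply Rmin_r]).
  assert (hte : t < eps) by (unfold t; eapply Rle_lt_trans; [apply Rmin_l|lra]).
  exists t. split; [lra|split; [lra|split; [lra|]]].
  rewrite g_pos by lra.
  assert (hl : ln t <= - M) by (rewrite <- (ln_exp (- M)); apply ln_le; lra).
  assert (hZl : Z * ln t >= Rabs S + Q + 1).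
  { assert (E : Rabs S + Q + 1 = Z * (- M)) by (unfold M; field; lra). rewrite E.
    apply Rle_ge. apply Rmult_le_compat_neg_l; lra. }
  assert (hSabs : - Rabs S <= S) by (pose proof (Rabs_pos S); pose proof (Rle_abs (- S)); rewrite Rabs_Ropp in *; lra).
  assert (tQ : t * Q <= Q) by (rewrite <- (Rmult_1_l Q) at 2; apply Rmult_le_compat_r; lra).
  replace (t * S - t ^ 2 * Q + Z * (t * ln t)) with (t * (S - t * Q + Z * ln t)) by ring.
  apply Rmult_lt_0_compat; lra.
Qed.


Lemma combine P0 P1 l T1 T2 T3 T4 T5 T6 B1 B2 B3 B4 B5 B6 N :
  P1 - P0 = l + T1 + T2 + T3 + T4 + T5 + T6 ->
  T1 >= B1 -> T2 >= B2 -> T3 >= B3 -> T4 >= B4 -> T5 >= B5 -> T6 >= B6 ->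
  N = l + B1 + B2 + B3 + B4 + B5 + B6 -> N > 0 -> P1 > P0.
Proof. intros. lra. Qed.

Lemma push rn sn a b da db :
  2 <= INR rn -> 2 <= INR sn -> 0 < INR rn * INR sn - INR rn - INR sn ->
  domphi rn sn a b -> 0 < a + b -> 0 < INR rn - 1 - a - b ->
  (0 < a \/ 0 <= da) -> (0 < b \/ 0 <= db) ->
  (0 < 1 - (INR sn - 1) * a - b \/ 0 <= - (INR sn - 1) * da - db) ->
  (0 < INR rn * INR sn - INR rn - INR sn - INR sn * b \/ 0 <= - INR sn * db) ->
  ((a = 0 /\ 0 < da) \/ (b = 0 /\ 0 < db) \/
   (1 - (INR sn - 1) * a - b = 0 /\ 0 < - (INR sn - 1) * da - db)) ->
  forall eps, 0 < eps -> exists a' b', domphi rn sn a' b' /\ Rabs (a' - a) < eps /\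
     Rabs (b' - b) < eps /\ phi rn sn a' b' > phi rn sn a b.
Proof.
  intros hr hs hk Hd hA hB ca cb cC cD Hdes eps he.
  destruct Hd as [[ha [hb hc]] [hB0 hD0]].
  assert (hs1 : 0 < INR sn - 1) by lra.
  assert (w3 : - (2 / (INR sn - 1)) <= 0) by (assert (0 < 2 / (INR sn - 1)) by (apply Rdiv_lt_0_compat; lra); lra).
  assert (w5 : - (1 / (INR sn * (INR sn - 1))) <= 0)
    by (assert (0 < 1 / (INR sn * (INR sn - 1))) by (apply Rdiv_lt_0_compat; [lra|apply Rmult_lt_0_compat; lra]); lra).
  assert (w6 : - (1 / (INR sn - 1)) <= 0) by (assert (0 < 1 / (INR sn - 1)) by (apply Rdiv_lt_0_compat; lra); lra).
  destruct (term_any 1 (a + b) (da + db) (Rlt_le _ _ hA) (or_introl hA)) as [L1 [Q1 [z1 [hQ1 [hz1 [ez1 T1]]]]]].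
  destruct (term_any 1 (INR rn - 1 - a - b) (- (da + db)) (Rlt_le _ _ hB) (or_introl hB)) as [L2 [Q2 [z2 [hQ2 [hz2 [ez2 T2]]]]]].
  destruct (term_any (- (2 / (INR sn - 1))) b db hb) as [L3 [Q3 [z3 [hQ3 [hz3 [ez3 T3]]]]]].
  { destruct cb; [left; assumption|right; split; assumption]. }
  destruct (term_any (-1) a da ha) as [L4 [Q4 [z4 [hQ4 [hz4 [ez4 T4]]]]]].
  { destruct ca; [left; assumption|right; split; [assumption|lra]]. }
  destruct (term_any (- (1 / (INR sn * (INR sn - 1)))) (INR rn * INR sn - INR rn - INR sn - INR sn * b) (- INR sn * db) hD0)
    as [L5 [Q5 [z5 [hQ5 [hz5 [ez5 T5]]]]]].
  { destruct cD; [left; assumption|right; split; assumption]. }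
  assert (hC0 : 0 <= 1 - (INR sn - 1) * a - b) by lra.
  destruct (term_any (- (1 / (INR sn - 1))) (1 - (INR sn - 1) * a - b) (- (INR sn - 1) * da - db) hC0)
    as [L6 [Q6 [z6 [hQ6 [hz6 [ez6 T6]]]]]].
  { destruct cC; [left; assumption|right; split; assumption]. }
  assert (hZ : z1 + z2 + z3 + z4 + z5 + z6 < 0).
  { destruct Hdes as [[e1 e2]|[[e1 e2]|[e1 e2]]].
    - rewrite (ez4 e1). lra.
    - rewrite (ez3 e1). assert (0 < 2 / (INR sn - 1) * db) by (apply Rmult_lt_0_compat; [apply Rdiv_lt_0_compat|]; lra). lra.
    - rewrite (ez6 e1). assert (0 < 1 / (INR sn - 1) * (- (INR sn - 1) * da - db)) by (apply Rmult_lt_0_compat; [apply Rdiv_lt_0_compat|]; lra). lra. }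
  destruct (dom_aff a da ha ca) as [d1 [hd1 D1]].
  destruct (dom_aff b db hb cb) as [d2 [hd2 D2]].
  destruct (dom_aff _ _ hC0 cC) as [d3 [hd3 D3]].
  destruct (dom_aff _ (- (da + db)) hB0 (or_introl hB)) as [d4 [hd4 D4]].
  destruct (dom_aff _ _ hD0 cD) as [d5 [hd5 D5]].
  set (K := 1 + Rabs da + Rabs db).
  assert (hK : 1 <= K) by (unfold K; pose proof (Rabs_pos da); pose proof (Rabs_pos db); lra).
  set (del := Rmin (eps / K) (Rmin d1 (Rmin d2 (Rmin d3 (Rmin d4 d5))))).
  assert (hdel : 0 < del).
  { unfold del. repeat apply Rmin_pos; try assumption. apply Rdiv_lt_0_compat; lra. }
  set (S := (da + db) * ln (INR rn - 1) + L1 + L2 + L3 + L4 + L5 + L6).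
  set (Q := Q1 + Q2 + Q3 + Q4 + Q5 + Q6).
  destruct (numeric S Q (z1 + z2 + z3 + z4 + z5 + z6) del) as [t [ht0 [htd [ht1 Hnum]]]];
    try assumption. { unfold Q; lra. }
  assert (m1 : del <= eps / K) by apply Rmin_l.
  assert (m2 : del <= d1) by (eapply Rle_trans; [apply Rmin_r|apply Rmin_l]).
  assert (m3 : del <= d2) by (eapply Rle_trans; [apply Rmin_r|]; eapply Rle_trans; [apply Rmin_r|apply Rmin_l]).
  assert (m4 : del <= d3) by (eapply Rle_trans; [apply Rmin_r|]; eapply Rle_trans; [apply Rmin_r|];
                              eapply Rle_trans; [apply Rmin_r|apply Rmin_l]).
  assert (m5 : del <= d4) by (eapply Rle_trans; [apply Rmin_r|]; eapply Rle_trans; [apply Rmin_r|];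
                              eapply Rle_trans; [apply Rmin_r|]; eapply Rle_trans; [apply Rmin_r|apply Rmin_l]).
  assert (m6 : del <= d5) by (eapply Rle_trans; [apply Rmin_r|]; eapply Rle_trans; [apply Rmin_r|];
                              eapply Rle_trans; [apply Rmin_r|]; eapply Rle_trans; [apply Rmin_r|apply Rmin_r]).
  assert (htt : 0 < t <= 1) by lra.
  specialize (D1 t ltac:(lra)). specialize (D2 t ltac:(lra)). specialize (D3 t ltac:(lra)).
  specialize (D4 t ltac:(lra)). specialize (D5 t ltac:(lra)).
  assert (tK : t * K < eps).
  { apply Rlt_le_trans with (del * K). { apply Rmult_lt_compat_r; lra. }
    apply Rle_trans with (eps / K * K). { apply Rmult_le_compat_r; lra. }
    right. field. lra. }
  exists (a + t * da), (b + t * db).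
  split; [|split; [|split]].
  - unfold domphi, inK. clear T1 T2 T3 T4 T5 T6 Hnum ez1 ez2 ez3 ez4 ez5 ez6.
    repeat split.
    + rewrite Rmult_comm; exact D1.
    + rewrite Rmult_comm; exact D2.
    + replace ((INR sn - 1) * (a + t * da) + (b + t * db)) with (1 - (1 - (INR sn - 1) * a - b + (- (INR sn - 1) * da - db) * t)) by ring. lra.
    + replace (INR rn - 1 - (a + t * da) - (b + t * db)) with (INR rn - 1 - a - b + - (da + db) * t) by ring. exact D4.
    + replace (INR rn * INR sn - INR rn - INR sn - INR sn * (b + t * db)) with (INR rn * INR sn - INR rn - INR sn - INR sn * b + - INR sn * db * t) by ring. exact D5.
  - replace (a + t * da - a) with (t * da) by ring. rewrite Rabs_mult, (Rabs_right t) by lra.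
    apply Rle_lt_trans with (t * K); [|exact tK]. apply Rmult_le_compat_l; [lra|].
    unfold K. pose proof (Rabs_pos db). lra.
  - replace (b + t * db - b) with (t * db) by ring. rewrite Rabs_mult, (Rabs_right t) by lra.
    apply Rle_lt_trans with (t * K); [|exact tK]. apply Rmult_le_compat_l; [lra|].
    unfold K. pose proof (Rabs_pos da). lra.
  - eapply combine with (l := t * ((da + db) * ln (INR rn - 1))).
    2: apply (T1 t (a + t * da + (b + t * db)) htt); [ring|lra].
    2: apply (T2 t (INR rn - 1 - (a + t * da) - (b + t * db)) htt); [ring|lra].
    2: apply (T3 t (b + t * db) htt); [ring|lra].
    2: apply (T4 t (a + t * da) htt); [ring|lra].
    2: apply (T5 t (INR rn * INR sn - INR rn - INR sn - INR sn * (b + t * db)) htt); [ring|lra].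
    2: apply (T6 t (1 - (INR sn - 1) * (a + t * da) - (b + t * db)) htt); [ring|lra].
    + unfold phi. ring.
    + reflexivity.
    + assert (E : t * S - t ^ 2 * Q + (z1 + z2 + z3 + z4 + z5 + z6) * g t =
          t * ((da + db) * ln (INR rn - 1)) + (t * L1 - t ^ 2 * Q1 + z1 * g t) + (t * L2 - t ^ 2 * Q2 + z2 * g t)
          + (t * L3 - t ^ 2 * Q3 + z3 * g t) + (t * L4 - t ^ 2 * Q4 + z4 * g t) + (t * L5 - t ^ 2 * Q5 + z5 * g t)
          + (t * L6 - t ^ 2 * Q6 + z6 * g t)) by (unfold S, Q; ring).
      rewrite <- E. exact Hnum.
Qed.


Lemma B0pos rn sn a b : 2 <= INR rn -> 2 <= INR sn -> (3 <= INR rn \/ 3 <= INR sn) ->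
  domphi rn sn a b -> 0 < INR rn - 1 - a - b.
Proof.
  intros hr hs h3 [[ha [hb hc]] [hB0 hD0]].
  destruct (Rlt_or_le 0 (INR rn - 1 - a - b)) as [H|H]; [exact H|exfalso].
  assert (h1 : 0 <= (INR sn - 2) * a) by (apply Rmult_le_pos; lra).
  assert (hab : a + b <= 1) by lra.
  assert (er : INR rn = 2) by lra.
  destruct h3 as [h3|h3]; [lra|].
  assert (h2 : a <= (INR sn - 2) * a) by (rewrite <- (Rmult_1_l a) at 1; apply Rmult_le_compat_r; lra).
  assert (ea : a = 0) by lra. subst a.
  assert (eb : 1 <= b) by lra.
  assert (INR sn * 1 <= INR sn * b) by (apply Rmult_le_compat_l; lra).
  rewrite er in hD0. lra.
Qed.

Lemma part_a (rn sn : nat) : 2 <= INR rn -> 2 <= INR sn ->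
  0 < INR rn * INR sn - INR rn - INR sn -> (3 <= INR rn \/ 3 <= INR sn) ->
  forall a b : R, local_max_phi rn sn a b -> (a = 0 /\ b = 0) \/ intK sn a b.
Proof.
  intros hr hs hk h3 a b [Hd [eps [he Hloc]]].
  pose proof (B0pos rn sn a b hr hs h3 Hd) as hB.
  pose proof Hd as [[ha [hb hc]] [hB0 hD0]].
  assert (contra : forall da db,
    (0 < a \/ 0 <= da) -> (0 < b \/ 0 <= db) ->
    (0 < 1 - (INR sn - 1) * a - b \/ 0 <= - (INR sn - 1) * da - db) ->
    (0 < INR rn * INR sn - INR rn - INR sn - INR sn * b \/ 0 <= - INR sn * db) ->
    ((a = 0 /\ 0 < da) \/ (b = 0 /\ 0 < db) \/
     (1 - (INR sn - 1) * a - b = 0 /\ 0 < - (INR sn - 1) * da - db)) -> 0 < a + b -> False).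
  { intros da db ca cb cC cD Hdes hA.
    destruct (push rn sn a b da db hr hs hk Hd hA hB ca cb cC cD Hdes eps he) as [a' [b' [H1 [H2 [H3 H4]]]]].
    specialize (Hloc a' b' H1 H2 H3). lra. }
  destruct (Req_dec b 0) as [eb|nb].
  - destruct (Req_dec a 0) as [ea|na]; [left; split; assumption|].
    exfalso. subst b.
    apply (contra (- (1 / (INR sn - 1))) 1).
    + left; lra.
    + right; lra.
    + right. replace (- (INR sn - 1) * - (1 / (INR sn - 1)) - 1) with 0 by (field; lra). lra.
    + left. rewrite Rmult_0_r. lra.
    + right; left; split; [reflexivity|lra].
    + lra.
  - destruct (Req_dec a 0) as [ea|na].
    + exfalso. subst a.
      apply (contra 1 (- (INR sn - 1))).
      * right; lra.
      * left; lra.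
      * right; lra.
      * right. replace (- INR sn * - (INR sn - 1)) with (INR sn * (INR sn - 1)) by ring.
        apply Rmult_le_pos; lra.
      * left; split; [reflexivity|lra].
      * lra.
    + destruct (Rlt_or_le ((INR sn - 1) * a + b) 1) as [hlt|hle].
      * right. unfold intK. repeat split; lra.
      * exfalso. apply (contra (-1) 0).
        -- left; lra.
        -- right; lra.
        -- right; lra.
        -- right. rewrite Rmult_0_r. lra.
        -- right; right; split; lra.
        -- lra.
Qed.

Theorem lemmaA1 (r s : nat) (hr : (2 <= r)%nat) (hs : (2 <= s)%nat)
  (hrs : ((5 <= s)%nat /\ exists rho : R, is_rho (INR s) rho /\ rho < INR r)
         \/ ((s <= 4)%nat /\ ~ (r = 2%nat /\ s = 2%nat))) :
  (* (a) *)
  (forall a b : R, local_max_phi r s a b -> (a = 0 /\ b = 0) \/ intK s a b)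
  /\
  (* (b) *)
  (forall a b : R, intK s a b -> regphi r s a b -> stationary_phi r s a b ->
     exists x : R, -1 < x /\ a = alphax r s x /\ b = betax r s x /\ star r s x)
  /\
  (* (c) *)
  (forall x : R, -1 < x -> regphi r s (alphax r s x) (betax r s x) ->
     is_derive (fx r s) x 0 -> star r s x).
Proof.
  assert (hn : ~ (r = 2%nat /\ s = 2%nat)).
  { destruct hrs as [[h5 _]|[_ h]]; [lia|exact h]. }
  assert (Hr : 2 <= INR r) by (replace 2 with (INR 2) by (simpl; ring); apply le_INR; lia).
  assert (Hs : 2 <= INR s) by (replace 2 with (INR 2) by (simpl; ring); apply le_INR; lia).
  assert (H3 : 3 <= INR r \/ 3 <= INR s).
  { destruct (Nat.eq_dec r 2) as [e|e].
    - right. replace 3 with (INR 3) by (simpl; ring). apply le_INR. lia.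
    - left. replace 3 with (INR 3) by (simpl; ring). apply le_INR. lia. }
  pose proof (k_pos r s hr hs hn) as hk.
  split; [|split].
  - exact (part_a r s Hr Hs hk H3).
  - exact (part_b r s hs Hr Hs hk).
  - exact (part_c r s hs Hr Hs hk).
Qed.
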